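(* Let $n\ge 3$, let $G$ be a group acting simply transitively by cube-complex automorphisms on a Cartesian product $\Delta$ of $n$ trees, and let $R \colon X^2 \to X^2$ be the map defined on the set $X$ of edge labels of the quotient cube complex $G\backslash\Delta$ by: $R(x_i,x_j) = (x_l^{-1},x_k^{-1})$ whenever $x_ix_jx_kx_l$ is the boundary label of a square of $G\backslash\Delta$, and $R(x_i,x_j)=(x_i,x_j)$ if $x_i,x_j$ do not appear next to each other in a square. Let $\tau \colon X^2 \to X^2$ be the flip map $\tau(x,y) = (y,x)$ and set $Q = \tau \circ R$. Then $Q$ satisfies the quantum Yang–Baxter equation $Q^{12}Q^{13}Q^{23} = Q^{23}Q^{13}Q^{12}$ on $X^3$.
   Context: For a map $Q \colon X^2 \to X^2$, $Q^{ij}$ denotes $Q$ acting on the $i$-th and $j$-th components of $X^3$ and the identity on the remaining component. Edges of the quotient cube complex are labelled by the elements of $G$ carrying the base vertex of $\Delta$ to the other endpoint of the corresponding lifted edge at the base vertex; reversing orientation inverts the label. *)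

(* Defs.v *)
From HB Require Import structures.
From mathcomp Require Import all_boot.

Set Implicit Arguments.
Unset Strict Implicit.
Unset Printing Implicit Defensive.

Local Open Scope group_scope.

Definition simple_graph (V : Type) (adj : V -> V -> Prop) : Prop :=
  (forall u v, adj u v -> adj v u) /\ (forall v, ~ adj v v).

Definition graph_connected (V : Type) (adj : V -> V -> Prop) : Prop :=
  forall u v : V, exists (k : nat) (p : nat -> V),
    p 0 = u /\ p k = v /\ (forall i, i < k -> adj (p i) (p i.+1)).

Definition has_cycle (V : Type) (adj : V -> V -> Prop) : Prop :=
  exists (k : nat) (c : nat -> V),
    3 <= k /\
    (forall i j, i < k -> j < k -> c i = c j -> i = j) /\
    (forall i, i.+1 < k -> adj (c i) (c i.+1)) /\
    adj (c k.-1) (c 0).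

Definition is_tree (V : Type) (adj : V -> V -> Prop) : Prop :=
  simple_graph adj /\ (exists v : V, True) /\ graph_connected adj /\ ~ has_cycle adj.

Section Product.
Variables (n : nat) (V : 'I_n -> Type) (adj : forall i : 'I_n, V i -> V i -> Prop).

Definition pvertex := forall i : 'I_n, V i.

Definition padj (p q : pvertex) : Prop :=
  exists i : 'I_n, adj (p i) (q i) /\ (forall k : 'I_n, k != i -> p k = q k).

(* squares of Delta (2-cubes e_i x e_j, i <> j), given by their corners
   p0, p1, p2, p3 in cyclic order along the boundary:
   p0 -> p1 moves coordinate i, p1 -> p2 moves coordinate j,
   p2 -> p3 moves coordinate i back, p3 -> p0 moves coordinate j back. *)
Definition psquare (p0 p1 p2 p3 : pvertex) : Prop :=
  exists i j : 'I_n, i != j /\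
    (forall k : 'I_n, k != i -> k != j ->
        p0 k = p1 k /\ p1 k = p2 k /\ p2 k = p3 k) /\
    p0 i = p3 i /\ p1 i = p2 i /\ adj (p0 i) (p1 i) /\
    p0 j = p1 j /\ p2 j = p3 j /\ adj (p1 j) (p2 j).

Variable G : groupType.
Variable act : G -> pvertex -> pvertex.

Definition is_action : Prop :=
  (forall v, act 1 v = v) /\ (forall g h v, act (g * h) v = act g (act h v)).

Definition acts_by_cube_automorphisms : Prop :=
  (forall g p q, padj (act g p) (act g q) <-> padj p q) /\
  (forall g p0 p1 p2 p3,
      psquare (act g p0) (act g p1) (act g p2) (act g p3) <-> psquare p0 p1 p2 p3).

Definition simply_transitive : Prop :=
  forall v w : pvertex, exists! g : G, act g v = w.

Variable v0 : pvertex.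

(* X: the labels g of the edges at the base vertex, i.e. [v0, g v0] is an edge *)
Definition edge_label (g : G) : Prop := padj v0 (act g v0).
Definition label_set := {g : G | edge_label g}.

(* x1 x2 x3 x4 is the boundary label of a square of G \ Delta: the lift of the
   boundary path starting at v0, i.e. v0, x1 v0, x1x2 v0, x1x2x3 v0, is the
   boundary of a square of Delta, and the path closes up: x1 x2 x3 x4 = 1. *)
Definition square_label (x1 x2 x3 x4 : G) : Prop :=
  psquare v0 (act x1 v0) (act (x1 * x2) v0) (act (x1 * x2 * x3) v0) /\
  x1 * x2 * x3 * x4 = 1.

Definition is_square_map (R : (label_set * label_set)%type -> (label_set * label_set)%type) : Prop :=
  (forall xi xj xk xl : label_set,
      square_label (proj1_sig xi) (proj1_sig xj) (proj1_sig xk) (proj1_sig xl) ->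
      proj1_sig (R (xi, xj)).1 = (proj1_sig xl)^-1 /\ proj1_sig (R (xi, xj)).2 = (proj1_sig xk)^-1) /\
  (forall xi xj : label_set,
      ~ (exists xk xl : label_set, square_label (proj1_sig xi) (proj1_sig xj) (proj1_sig xk) (proj1_sig xl)) ->
      R (xi, xj) = (xi, xj)).

End Product.

Definition flip (X : Type) (p : (X * X)%type) : (X * X)%type := (p.2, p.1).

Section YB.
Variables (X : Type) (Q : (X * X)%type -> (X * X)%type).
Definition Q12 (t : (X * X * X)%type) : (X * X * X)%type :=
  let: (x, y, z) := t in let: (a, b) := Q (x, y) in (a, b, z).
Definition Q13 (t : (X * X * X)%type) : (X * X * X)%type :=
  let: (x, y, z) := t in let: (a, c) := Q (x, z) in (a, y, c).
Definition Q23 (t : (X * X * X)%type) : (X * X * X)%type :=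
  let: (x, y, z) := t in let: (b, c) := Q (y, z) in (x, b, c).

Definition quantum_YBE : Prop :=
  forall t : (X * X * X)%type, Q12 (Q13 (Q23 t)) = Q23 (Q13 (Q12 t)).
End YB.

(* Main.v *)
Require Import Defs.
From HB Require Import structures.
From mathcomp Require Import all_boot.
From Stdlib Require Import Classical FunctionalExtensionality ProofIrrelevance.
Set Implicit Arguments.
Unset Strict Implicit.

Section Vert.
Variables (n : nat) (V : 'I_n -> Type) (adj : forall i : 'I_n, V i -> V i -> Prop).
Hypothesis Hsym : forall i (u v : V i), adj u v -> adj v u.
Hypothesis Hirr : forall i (v : V i), ~ adj v v.

Definition step (p q : pvertex V) (i : 'I_n) : Prop :=
  adj (p i) (q i) /\ (forall k, k != i -> p k = q k).

Definition Nrel (u m w m' : pvertex V) : Prop :=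
  (~ (exists q, psquare adj u m w q) /\ m' = m) \/ psquare adj u m w m'.

Lemma step_uniq p q i j : step p q i -> step p q j -> i = j.
Proof.
move=> [Ha _] [_ Hb]; case: (eqVneq i j) => // Hij.
by exfalso; rewrite (Hb i Hij) in Ha; exact: Hirr Ha.
Qed.

Lemma psquare_steps p0 p1 p2 p3 : psquare adj p0 p1 p2 p3 ->
  exists i j, i != j /\ step p0 p1 i /\ step p1 p2 j /\ step p2 p3 i /\ step p3 p0 j
   /\ step p0 p3 j /\ step p3 p2 i /\ (forall k, p3 k = if k == i then p0 k else p2 k).
Proof.
move=> [i [j [Hij [Hk [E03 [E12 [A01 [E01 [E23 A12]]]]]]]]].
have Hji : j != i by rewrite eq_sym.
have C : forall k, k != i -> k != j -> p0 k = p1 k /\ p1 k = p2 k /\ p2 k = p3 k by [].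
exists i, j; do !split => //;
  try (rewrite ?E01 -?E23 -?E03 -?E12; first [done | by apply: Hsym]);
  move=> k;
  (case: (eqVneq k i) => [Eki|Hki]; case: (eqVneq k j) => [Ekj|Hkj];
   [by rewrite -Eki -Ekj eqxx in Hij| subst k | subst k | ]);
  rewrite ?eqxx ?(negbTE Hij) ?(negbTE Hji) ?(negbTE Hki) ?(negbTE Hkj);
  try done; intros; try (case: (C _ Hki Hkj) => X1 [X2 X3]); congruence.
Qed.

Definition flipv (u w : pvertex V) (i : 'I_n) : pvertex V :=
  fun k => if k == i then u k else w k.

Lemma psquare_mk p0 p1 p2 i j : i != j -> step p0 p1 i -> step p1 p2 j ->
  psquare adj p0 p1 p2 (flipv p0 p2 i).
Proof.
move=> Hij [A01 E01] [A12 E12]; have Hji : j != i by rewrite eq_sym.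
exists i, j; rewrite /flipv; split=> //; split.
  move=> k Hki Hkj; rewrite (negbTE Hki) (E01 k Hki) (E12 k Hkj) //.
rewrite eqxx (negbTE Hji) (E12 i Hij) (E01 j Hji); do !split => //; rewrite -(E12 i Hij) //.
Qed.

Lemma Nrel_same u m w m' i : step u m i -> step m w i -> Nrel u m w m' -> m' = m.
Proof.
move=> S1 S2 [[_ ->]//|/psquare_steps [i' [j' [Hij [S1' [S2' _]]]]]].
have E1 := step_uniq S1 S1'; have E2 := step_uniq S2 S2'.
by rewrite -E1 -E2 eqxx in Hij.
Qed.

Lemma Nrel_diff u m w m' i j : i != j -> step u m i -> step m w j -> Nrel u m w m' ->
  step u m' j /\ step m' w i /\ (forall k, m' k = if k == i then u k else w k).
Proof.
move=> Hij S1 S2 [[Hn _]|].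
  by exfalso; apply: Hn; exists (flipv u w i); exact: psquare_mk Hij S1 S2.
move/psquare_steps=> [i' [j' [_ [S1' [S2' [_ [_ [S3 [S4 Hf]]]]]]]]].
have E1 := step_uniq S1 S1'; have E2 := step_uniq S2 S2'.
by subst i' j'.
Qed.

Lemma step_if p q i : step p q i -> forall k, q k = if k == i then q k else p k.
Proof. by move=> [_ E] k; case: (eqVneq k i) => // /E ->. Qed.


Lemma Nrel_fun u m w x y i j : step u m i -> step m w j -> Nrel u m w x -> Nrel u m w y -> x = y.
Proof.
move=> S1 S2 N1 N2; case: (eqVneq i j) => [E|Hij].
  subst j; by rewrite (Nrel_same S1 S2 N1) (Nrel_same S1 S2 N2).
case: (Nrel_diff Hij S1 S2 N1) => _ [_ F1]; case: (Nrel_diff Hij S1 S2 N2) => _ [_ F2].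
by apply: functional_extensionality_dep => k; rewrite F1 F2.
Qed.

Ltac simp_if := repeat (rewrite ?eqxx; match goal with
  | H : is_true (?x != ?y) |- context[?x == ?y] => rewrite (negbTE H)
  | H : is_true (?x != ?y) |- context[?y == ?x] => rewrite [y == x]eq_sym (negbTE H)
  end).

Ltac gather k := repeat match goal with
  | S : step _ _ _ |- _ => move: (step_if S k); clear S
  | F : forall k0 : 'I_n, _ = _ |- _ => move: (F k); clear F
  end.

Ltac coord3 a b c := apply functional_extensionality_dep; let k := fresh "k" in intro k; gather k;
  case: (eqVneq k a) => [->|?]; [|case: (eqVneq k b) => [->|?]; [|case: (eqVneq k c) => [->|?]]];
  simp_if; intros; congruence.

Lemma braid_vert p0 p1 p2 p3 a b c q2 q1 q2' r1 r2 r1' :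
  step p0 p1 a -> step p1 p2 b -> step p2 p3 c ->
  Nrel p1 p2 p3 q2 -> Nrel p0 p1 q2 q1 -> Nrel q1 q2 p3 q2' ->
  Nrel p0 p1 p2 r1 -> Nrel r1 p2 p3 r2 -> Nrel p0 r1 r2 r1' ->
  q1 = r1' /\ q2' = r2.
Proof.
move=> S01 S12 S23 N1 N2 N3 N4 N5 N6.
case: (eqVneq a b) => [Eab|Hab]; case: (eqVneq b c) => [Ebc|Hbc];
  case: (eqVneq a c) => [Eac|Hac].
- subst b c.
  have E1 := Nrel_same S12 S23 N1; subst q2.
  have E2 := Nrel_same S01 S12 N2; subst q1.
  have E3 := Nrel_same S12 S23 N3; subst q2'.
  have E4 := Nrel_same S01 S12 N4; subst r1.
  have E5 := Nrel_same S12 S23 N5; subst r2.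
  have E6 := Nrel_same S01 S12 N6; subst r1'.
  by [].
- by subst; rewrite eqxx in Hac.
- by subst; rewrite eqxx in Hbc.
- subst b.
  case: (Nrel_diff Hac S12 S23 N1) => T1 [T2 F1].
  case: (Nrel_diff Hac S01 T1 N2) => U1 [U2 F2].
  have E3 := Nrel_same U2 T2 N3; subst q2'.
  have E4 := Nrel_same S01 S12 N4; subst r1.
  have E5 := Nrel_fun S12 S23 N5 N1; subst r2.
  have E6 := Nrel_fun S01 T1 N6 N2; subst r1'.
  by [].
- by subst; rewrite eqxx in Hab.
- subst c.
  have E1 := Nrel_same S12 S23 N1; subst q2.
  have E2 := Nrel_fun S01 S12 N2 N4; subst q1.
  case: (Nrel_diff Hab S01 S12 N4) => T1 [T2 F1].
  case: (Nrel_diff Hab T2 S23 N3) => U1 [U2 F2].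
  have E5 := Nrel_fun T2 S23 N5 N3; subst r2.
  have E6 := Nrel_same T1 U1 N6; subst r1'.
  by [].
- subst c. have Hba : b != a by rewrite eq_sym.
  case: (Nrel_diff Hba S12 S23 N1) => T1 [T2 F1].
  have E2 := Nrel_same S01 T1 N2; subst q1.
  case: (Nrel_diff Hab T1 T2 N3) => U1 [U2 F3].
  case: (Nrel_diff Hab S01 S12 N4) => W1 [W2 G1].
  have E5 := Nrel_same W2 S23 N5; subst r2.
  case: (Nrel_diff Hba W1 W2 N6) => X1 [X2 G3].
  split; coord3 a b a.
- case: (Nrel_diff Hbc S12 S23 N1) => T1 [T2 F1].
  case: (Nrel_diff Hac S01 T1 N2) => U1 [U2 F2].
  case: (Nrel_diff Hab U2 T2 N3) => U3 [U4 F3].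
  case: (Nrel_diff Hab S01 S12 N4) => W1 [W2 G1].
  case: (Nrel_diff Hac W2 S23 N5) => W3 [W4 G2].
  case: (Nrel_diff Hbc W1 W3 N6) => W5 [W6 G3].
  split; coord3 a b c.
Qed.

End Vert.

Section Grp.
Local Open Scope group_scope.
Variables (n : nat) (V : 'I_n -> Type) (adj : forall i : 'I_n, V i -> V i -> Prop).
Hypothesis Hsym : forall i (u v : V i), adj u v -> adj v u.
Hypothesis Hirr : forall i (v : V i), ~ adj v v.
Variables (G : groupType) (act : G -> pvertex V -> pvertex V).
Hypothesis Hact : is_action act.
Hypothesis Haut : acts_by_cube_automorphisms adj act.
Hypothesis Hst : simply_transitive act.
Variable v0 : pvertex V.
Variable R : label_set adj act v0 * label_set adj act v0 ->
       label_set adj act v0 * label_set adj act v0.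
Hypothesis HR : is_square_map R.

Local Notation o g := (act g v0).
Local Notation L := (label_set adj act v0).

Lemma actM g h v : act (g * h) v = act g (act h v).
Proof. exact: (proj2 Hact). Qed.
Lemma act1 v : act 1 v = v.
Proof. exact: (proj1 Hact). Qed.
Lemma actVK g v : act g^-1 (act g v) = v.
Proof. by rewrite -actM mulVg act1. Qed.
Lemma actKV g v : act g (act g^-1 v) = v.
Proof. by rewrite -actM mulgV act1. Qed.

Lemma o_inj g h : o g = o h -> g = h.
Proof.
move=> E; case: (Hst v0 (o g)) => g' [_ U].
by rewrite -(U g erefl) -(U h (esym E)).
Qed.

Lemma lab_inj (a b : L) : proj1_sig a = proj1_sig b -> a = b.
Proof.
case: a => a Ha; case: b => b Hb /= E; subst b; f_equal; apply: proof_irrelevance.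
Qed.

Lemma padj_act g p q : padj adj p q -> padj adj (act g p) (act g q).
Proof. exact: (proj2 (proj1 Haut g p q)). Qed.

Lemma Nrel_act g u m w m' : Nrel adj u m w m' -> Nrel adj (act g u) (act g m) (act g w) (act g m').
Proof.
case=> [[Hn ->]|Hs]; [left; split=> // | right].
  move=> [q Hq]; apply: Hn; exists (act g^-1 q).
  apply: (proj1 (proj2 Haut g _ _ _ _)); by rewrite actKV.
exact: (proj2 (proj2 Haut g _ _ _ _)).
Qed.

Lemma Rspec0 (x y a b : L) : R (x, y) = (a, b) ->
  proj1_sig a * proj1_sig b = proj1_sig x * proj1_sig y /\
  Nrel adj v0 (o (proj1_sig x)) (o (proj1_sig x * proj1_sig y)) (o (proj1_sig a)).
Proof.
move=> E.
case: (classic (exists q, psquare adj v0 (o (proj1_sig x)) (o (proj1_sig x * proj1_sig y)) q)) => [[q Hq]|Hn].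
  case: (Hst v0 q) => h [Hh _]; subst q.
  have [i [j [Hij [_ [_ [S23 [S30 _]]]]]]] := psquare_steps Hsym Hq.
  set xy := proj1_sig x * proj1_sig y.
  have Lk : edge_label adj act v0 (xy^-1 * h).
    rewrite /edge_label actM -{1}(actVK xy v0); apply: padj_act; by exists i.
  have Ll : edge_label adj act v0 h^-1.
    rewrite /edge_label -{1}(actVK h v0); apply: padj_act; by exists j.
  have Hsq : square_label adj act v0 (proj1_sig x) (proj1_sig y)
      (proj1_sig (exist _ _ Lk)) (proj1_sig (exist _ _ Ll)).
    rewrite /square_label /= -/xy mulVKg mulgV; by split.
  have [Ea Eb] := proj1 HR x y _ _ Hsq.
  rewrite E /= in Ea Eb; rewrite Ea Eb /= invgK invgM invgK mulVKg; split=> //.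
  by right.
have Hn' : ~ (exists xk xl : L, square_label adj act v0 (proj1_sig x) (proj1_sig y) (proj1_sig xk) (proj1_sig xl)).
  by move=> [xk [xl [Hs _]]]; apply: Hn; eexists; exact: Hs.
rewrite (proj2 HR x y Hn') in E; case: E => <- <-; split=> //; by left.
Qed.

Lemma Rspec (x y a b : L) g : R (x, y) = (a, b) ->
  proj1_sig a * proj1_sig b = proj1_sig x * proj1_sig y /\
  Nrel adj (o g) (o (g * proj1_sig x)) (o (g * proj1_sig x * proj1_sig y)) (o (g * proj1_sig a)).
Proof.
move=> /Rspec0 [E N]; split=> //.
by have := Nrel_act g N; rewrite -!actM mulgA.
Qed.

End Grp.

Unset Implicit Arguments.
Set Strict Implicit.

Theorem corollary1
  (n : nat) (hn : 3 <= n)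
  (V : 'I_n -> Type) (adj : forall i : 'I_n, V i -> V i -> Prop)
  (Htree : forall i : 'I_n, is_tree (adj i))
  (G : groupType) (act : G -> pvertex V -> pvertex V)
  (Hact : is_action act)
  (Haut : acts_by_cube_automorphisms adj act)
  (Hst : simply_transitive act)
  (v0 : pvertex V)
  (R : label_set adj act v0 * label_set adj act v0 ->
       label_set adj act v0 * label_set adj act v0)
  (HR : is_square_map R) :
  quantum_YBE (fun p => flip (R p)).
Proof.
have Hsym : forall i (u v : V i), adj i u v -> adj i v u by move=> i; case: (Htree i) => [[]].
have Hirr : forall i (v : V i), ~ adj i v v by move=> i; case: (Htree i) => [[]].
move=> [[x y] z]; rewrite /Q12 /Q13 /Q23 /flip /=.
case E1: (R (y, z)) => [w v] /=.
case E4: (R (x, y)) => [m s] /=.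
case E2: (R (x, w)) => [e u] /=.
case E3: (R (u, v)) => [f h] /=.
case E5: (R (s, z)) => [n' g'] /=.
case E6: (R (m, n')) => [p q] /=.
have [P1 N1] := Rspec Hsym Hact Haut Hst HR (proj1_sig x) E1.
have [P2 N2] := Rspec Hsym Hact Haut Hst HR 1 E2.
have [P4 N4] := Rspec Hsym Hact Haut Hst HR 1 E4.
have [P6 N6] := Rspec Hsym Hact Haut Hst HR 1 E6.
have [P3 N3] := Rspec Hsym Hact Haut Hst HR (proj1_sig e) E3.
have [P5 N5] := Rspec Hsym Hact Haut Hst HR (proj1_sig m) E5.
rewrite !mul1g (act1 Hact) in N2 N4 N6.
rewrite P2 -mulgA P1 mulgA in N3.
rewrite P4 in N5.
have [a S01] := proj2_sig x.
have [b S12] : padj adj (act (sval x) v0) (act (sval x * sval y)%g v0).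
  by rewrite (actM Hact); apply: (padj_act Haut); exact: (proj2_sig y).
have [c S23] : padj adj (act (sval x * sval y)%g v0) (act (sval x * sval y * sval z)%g v0).
  by rewrite (actM Hact _ (sval z)); apply: (padj_act Haut); exact: (proj2_sig z).
have [Q1 Q2] := braid_vert Hsym Hirr S01 S12 S23 N1 N2 N3 N4 N5 N6.
have Ep := o_inj Hst Q1.
have Ef' := o_inj Hst Q2.
have Ef : sval f = sval q.
  by apply: (mulgI (sval e)); rewrite Ef' -P6 Ep.
have Eh : sval h = sval g'.
  apply: (mulgI (sval e * sval f)%g).
  by rewrite -mulgA P3 mulgA P2 -mulgA P1 Ef' -mulgA P5 !mulgA P4.
by rewrite (lab_inj Eh) (lab_inj Ef) (lab_inj Ep).
Qed.
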